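(* Let $A=[a_{ij}]\in\mathcal{M}_n(\mathbb{H})$ be an upper triangular nilpotent matrix whose graph $\mathcal{G}_A$ is a tree. Then $W(A)$ is the closed disk centered at the origin $$W(A)=\mathbb{D}_{\mathbb{H}}\Big(0,\ \max_{\beta\in\mathbb{S}^+_{\mathbb{R}^n}}\sum_{i,j=1}^n\beta_i\beta_j|a_{ij}|\Big).$$
   Context: $\mathbb{H}$ denotes the real quaternions, $|q|^2=qq^*$. For $\mathbf{x}\in\mathbb{H}^n$, $\mathbf{x}^*$ is the conjugate transpose and $\mathbb{S}_{\mathbb{H}^n}=\{\mathbf{x}:\mathbf{x}^*\mathbf{x}=1\}$; the numerical range is $W(A)=\{\mathbf{x}^*A\mathbf{x}:\mathbf{x}\in\mathbb{S}_{\mathbb{H}^n}\}$. $\mathbb{D}_{\mathbb{H}}(c,r)=\{q\in\mathbb{H}:|q-c|\le r\}$. $\mathbb{S}^+_{\mathbb{R}^n}=\{\beta\in\mathbb{R}^n:\|\beta\|=1,\ \beta_i\ge0\ \forall i\}$. The graph $\mathcal{G}_A$ of $A=[a_{ij}]$ is the undirected graph on $\{1,\dots,n\}$ with an edge between $i$ and $j$ (a loop if $i=j$) whenever $a_{ij}\ne0$ or $a_{ji}\ne0$; loops count as cycles; $A$ is a tree if $\mathcal{G}_A$ is connected and has no cycles. *)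

(* Defs.v *)
From mathcomp Require Import all_boot.
From Stdlib Require Import Reals.
Set Implicit Arguments. Unset Strict Implicit. Unset Printing Implicit Defensive.

Record quat : Type := Quat { qre : R; qi : R; qj : R; qk : R }.

Definition qzero : quat := Quat 0%R 0%R 0%R 0%R.
Definition qone  : quat := Quat 1%R 0%R 0%R 0%R.
Definition qadd (p q : quat) : quat :=
  Quat (qre p + qre q)%R (qi p + qi q)%R (qj p + qj q)%R (qk p + qk q)%R.
Definition qopp (p : quat) : quat := Quat (- qre p)%R (- qi p)%R (- qj p)%R (- qk p)%R.
Definition qsub (p q : quat) : quat := qadd p (qopp q).
Definition qmul (p q : quat) : quat :=
  let a1 := qre p in let b1 := qi p in let c1 := qj p in let d1 := qk p in
  let a2 := qre q in let b2 := qi q in let c2 := qj q in let d2 := qk q in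
  Quat (a1*a2 - b1*b2 - c1*c2 - d1*d2)%R
       (a1*b2 + b1*a2 + c1*d2 - d1*c2)%R
       (a1*c2 - b1*d2 + c1*a2 + d1*b2)%R
       (a1*d2 + b1*c2 - c1*b2 + d1*a2)%R.
Definition qconj (p : quat) : quat := Quat (qre p) (- qi p)%R (- qj p)%R (- qk p)%R.
Definition qnorm (p : quat) : R := sqrt (qre (qmul p (qconj p))).

Definition qeq_dec (p q : quat) : {p = q} + {p <> q}.
Proof.
destruct p as [a b c d], q as [a' b' c' d'].
destruct (Req_EM_T a a') as [e1|n1]; [|right; congruence].
destruct (Req_EM_T b b') as [e2|n2]; [|right; congruence].
destruct (Req_EM_T c c') as [e3|n3]; [|right; congruence].
destruct (Req_EM_T d d') as [e4|n4]; [|right; congruence].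
left; subst; reflexivity.
Defined.

Definition qnz (q : quat) : bool := if qeq_dec q qzero then false else true.

Definition qmx (n : nat) := 'I_n -> 'I_n -> quat.
Definition qvec (n : nat) := 'I_n -> quat.

Definition qmxmul n (A B : qmx n) : qmx n :=
  fun i j => \big[qadd/qzero]_(k < n) qmul (A i k) (B k j).
Definition qmx1 n : qmx n := fun i j => if i == j then qone else qzero.
Fixpoint qmxpow n (A : qmx n) (k : nat) : qmx n :=
  match k with O => @qmx1 n | S k' => qmxmul A (qmxpow A k') end.

Definition qmx_nilpotent n (A : qmx n) : Prop :=
  exists k, forall i j, qmxpow A k i j = qzero.
Definition qmx_upper_triangular n (A : qmx n) : Prop :=
  forall i j : 'I_n, (j < i)%N -> A i j = qzero.

Definition qdot n (x y : qvec n) : quat :=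
  \big[qadd/qzero]_(i < n) qmul (qconj (x i)) (y i).
Definition qquad n (A : qmx n) (x : qvec n) : quat :=
  \big[qadd/qzero]_(i < n) \big[qadd/qzero]_(j < n)
     qmul (qmul (qconj (x i)) (A i j)) (x j).

Definition in_qsphere n (x : qvec n) : Prop := qdot x x = qone.

Definition numrange n (A : qmx n) : quat -> Prop :=
  fun q => exists x : qvec n, in_qsphere x /\ q = qquad A x.

Definition qdisk (c : quat) (r : R) : quat -> Prop :=
  fun q => (qnorm (qsub q c) <= r)%R.

Definition in_pos_sphere n (b : 'I_n -> R) : Prop :=
  \big[Rplus/0%R]_(i < n) (b i * b i)%R = 1%R /\ forall i, (0 <= b i)%R.

Definition qmx_adj n (A : qmx n) : rel 'I_n :=
  fun i j => qnz (A i j) || qnz (A j i).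

Definition qmx_has_cycle n (A : qmx n) : Prop :=
  (exists i, qmx_adj A i i) \/
  (exists s : seq 'I_n, [/\ uniq s, (3 <= size s)%N & cycle (qmx_adj A) s]).

Definition qmx_connected n (A : qmx n) : Prop :=
  forall i j : 'I_n, connect (qmx_adj A) i j.

Definition qmx_tree n (A : qmx n) : Prop :=
  qmx_connected A /\ ~ qmx_has_cycle A.

Definition beta_form n (A : qmx n) (b : 'I_n -> R) : R :=
  \big[Rplus/0%R]_(i < n) \big[Rplus/0%R]_(j < n) (b i * b j * qnorm (A i j))%R.

(* Submission.v *)
Require Import Defs.
From mathcomp Require Import all_boot.
From Stdlib Require Import Reals.

Module Q.
From Stdlib Require Import Lra Psatz.
Local Open Scope R_scope.

Definition N (p : quat) : R := qre p * qre p + qi p * qi p + qj p * qj p + qk p * qk p.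
Definition qscal (c : R) (p : quat) : quat := Quat (c * qre p) (c * qi p) (c * qj p) (c * qk p).

Ltac qext := match goal with |- Quat _ _ _ _ = Quat _ _ _ _ => f_equal end.
Ltac qdes := repeat match goal with p : quat |- _ => destruct p end; simpl in *.

Lemma N_ge0 p : 0 <= N p.
Proof. unfold N; nra. Qed.

Lemma qnormE p : qnorm p = sqrt (N p).
Proof. unfold qnorm, N; f_equal; destruct p; simpl; ring. Qed.

Lemma qnorm_ge0 p : 0 <= qnorm p.
Proof. rewrite qnormE; apply sqrt_pos. Qed.

Lemma qnorm_sq p : qnorm p * qnorm p = N p.
Proof. rewrite qnormE; apply sqrt_sqrt, N_ge0. Qed.

Lemma N_mul p q : N (qmul p q) = N p * N q.
Proof. destruct p, q; unfold N; simpl; ring. Qed.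

Lemma qnorm_mul p q : qnorm (qmul p q) = qnorm p * qnorm q.
Proof. rewrite !qnormE N_mul; apply sqrt_mult; apply N_ge0. Qed.

Lemma qnorm_conj p : qnorm (qconj p) = qnorm p.
Proof. rewrite !qnormE; f_equal; destruct p; unfold N; simpl; ring. Qed.

Lemma qnorm_scal c p : 0 <= c -> qnorm (qscal c p) = c * qnorm p.
Proof.
intro hc. rewrite !qnormE.
replace (N (qscal c p)) with ((c * c) * N p); last first. { destruct p; unfold N, qscal; simpl. ring. }
rewrite sqrt_mult; [|nra|apply N_ge0].
rewrite sqrt_square; auto; nra.
Qed.

Lemma qnorm_zero : qnorm qzero = 0.
Proof. rewrite qnormE; unfold N; simpl. have -> : 0 * 0 + 0 * 0 + 0 * 0 + 0 * 0 = 0 by ring. exact sqrt_0. Qed.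

Lemma qnorm_eq0 p : qnorm p = 0 -> p = qzero.
Proof.
rewrite qnormE; intro h. apply sqrt_eq_0 in h; [|apply N_ge0].
unfold N in h; destruct p as [a b c d]; simpl in h; unfold qzero.
assert (a = 0) by nra. assert (b = 0) by nra. assert (c = 0) by nra. assert (d = 0) by nra.
subst; reflexivity.
Qed.

Lemma qnorm_sub0 q : qnorm (qsub q qzero) = qnorm q.
Proof. rewrite !qnormE; f_equal; destruct q; unfold N; simpl; ring. Qed.

Lemma CS p q : (qre p * qre q + qi p * qi q + qj p * qj q + qk p * qk q) *
   (qre p * qre q + qi p * qi q + qj p * qj q + qk p * qk q) <= N p * N q.
Proof.
destruct p as [a b c d], q as [e f g h]; unfold N; simpl.
assert (H : (a*a+b*b+c*c+d*d)*(e*e+f*f+g*g+h*h) -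
  (a*e+b*f+c*g+d*h)*(a*e+b*f+c*g+d*h) =
  (a*f-b*e)*(a*f-b*e) + (a*g-c*e)*(a*g-c*e) + (a*h-d*e)*(a*h-d*e) +
  (b*g-c*f)*(b*g-c*f) + (b*h-d*f)*(b*h-d*f) + (c*h-d*g)*(c*h-d*g)) by ring.
pose proof (Rle_0_sqr (a*f-b*e)); pose proof (Rle_0_sqr (a*g-c*e));
pose proof (Rle_0_sqr (a*h-d*e)); pose proof (Rle_0_sqr (b*g-c*f));
pose proof (Rle_0_sqr (b*h-d*f)); pose proof (Rle_0_sqr (c*h-d*g)).
unfold Rsqr in *. lra.
Qed.

Lemma sq_le D x y : 0 <= x -> 0 <= y -> D * D <= x * x * (y * y) -> D <= x * y.
Proof.
intros hx hy h. destruct (Rle_dec D (x*y)) as [|hn]; auto.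
assert (h1 : 0 <= x * y) by (apply Rmult_le_pos; auto).
assert (h2 : x * y < D) by lra.
assert ((x*y)*(x*y) < D * D) by (apply Rmult_le_0_lt_compat; lra).
nra.
Qed.

Lemma qnorm_add p q : qnorm (qadd p q) <= qnorm p + qnorm q.
Proof.
pose D := qre p * qre q + qi p * qi q + qj p * qj q + qk p * qk q.
assert (hD : D <= qnorm p * qnorm q).
{ pose proof (CS p q) as H. fold D in H.
  rewrite -(qnorm_sq p) -(qnorm_sq q) in H.
  apply sq_le; [apply qnorm_ge0|apply qnorm_ge0|exact H]. }
rewrite (qnormE (qadd p q)).
pose proof (qnorm_ge0 p); pose proof (qnorm_ge0 q).
rewrite -(sqrt_square (qnorm p + qnorm q)); last lra.
apply sqrt_le_1_alt.
replace (N (qadd p q)) with (N p + N q + 2 * D) by (unfold D, N; destruct p, q; simpl; ring).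
rewrite -(qnorm_sq p) -(qnorm_sq q). nra.
Qed.

Lemma qmul_assoc p q r : qmul p (qmul q r) = qmul (qmul p q) r.
Proof. qdes; unfold qmul; simpl; qext; ring. Qed.
Lemma qconj_mul p q : qconj (qmul p q) = qmul (qconj q) (qconj p).
Proof. qdes; unfold qmul, qconj; simpl; qext; ring. Qed.
Lemma qconjK p : qconj (qconj p) = p.
Proof. qdes; unfold qconj; simpl; qext; ring. Qed.
Lemma qmul_conj_l p : qmul (qconj p) p = qscal (N p) qone.
Proof. qdes; unfold qmul, qconj, qscal, N; simpl; qext; ring. Qed.
Lemma qmul_conj_r p : qmul p (qconj p) = qscal (N p) qone.
Proof. qdes; unfold qmul, qconj, qscal, N; simpl; qext; ring. Qed.
Lemma qmul_scal_l c p q : qmul (qscal c p) q = qscal c (qmul p q).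
Proof. qdes; unfold qmul, qscal; simpl; qext; ring. Qed.
Lemma qmul_scal_r c p q : qmul p (qscal c q) = qscal c (qmul p q).
Proof. qdes; unfold qmul, qscal; simpl; qext; ring. Qed.
Lemma qconj_scal c p : qconj (qscal c p) = qscal c (qconj p).
Proof. qdes; unfold qconj, qscal; simpl; qext; ring. Qed.
Lemma qscal_scal a b p : qscal a (qscal b p) = qscal (a * b) p.
Proof. qdes; unfold qscal; simpl; qext; ring. Qed.
Lemma qscal1 p : qscal 1 p = p.
Proof. qdes; unfold qscal; simpl; qext; ring. Qed.
Lemma qscal0 p : qscal 0 p = qzero.
Proof. qdes; unfold qscal, qzero; simpl; qext; ring. Qed.
Lemma qscal_zero c : qscal c qzero = qzero.
Proof. unfold qscal, qzero; simpl; qext; ring. Qed.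
Lemma qmul_one_l p : qmul qone p = p.
Proof. qdes; unfold qmul, qone; simpl; qext; ring. Qed.
Lemma qmul_one_r p : qmul p qone = p.
Proof. qdes; unfold qmul, qone; simpl; qext; ring. Qed.
Lemma qmul_zero_l p : qmul qzero p = qzero.
Proof. qdes; unfold qmul, qzero; simpl; qext; ring. Qed.
Lemma qmul_zero_r p : qmul p qzero = qzero.
Proof. qdes; unfold qmul, qzero; simpl; qext; ring. Qed.
Lemma qadd_scal a b p : qadd (qscal a p) (qscal b p) = qscal (a + b) p.
Proof. qdes; unfold qadd, qscal; simpl; qext; ring. Qed.
Lemma qre_add p q : qre (qadd p q) = qre p + qre q.
Proof. reflexivity. Qed.

Lemma qnz_false p : qnz p = false -> p = qzero.
Proof. unfold qnz. case: (qeq_dec p qzero) => [e|ne] h //. Qed.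
Lemma qnz_true p : qnz p = true -> p <> qzero.
Proof. unfold qnz. case: (qeq_dec p qzero) => [e|ne] h //. Qed.
Lemma qnz_zero : qnz qzero = false.
Proof. unfold qnz. by case: (qeq_dec qzero qzero). Qed.

Lemma N_unit u : qnorm u = 1 -> N u = 1.
Proof. intro h; rewrite -qnorm_sq h; ring. Qed.

End Q.
Module Tr.
Section Grow.
Variable n : nat.
Variable e : rel 'I_n.
Hypothesis esymm : forall x y, e x y = e y x.
Hypothesis nocyc : ~ (exists s : seq 'I_n, [/\ uniq s, (2 < size s)%N & cycle e s]).
Hypothesis conn : forall i j, connect e i j.
Variable X : Type.
Variable P : {set 'I_n} -> ('I_n -> X) -> Prop.
Variable i0 : 'I_n.
Variable u0 : 'I_n -> X.
Hypothesis P0 : P [set i0] u0.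
Hypothesis Pstep : forall S u s v, P S u -> s \in S -> v \notin S -> e s v ->
  (forall s', s' \in S -> e s' v -> s' = s) -> exists u', P (v |: S) u'.

Definition connin (S : {set 'I_n}) := forall a b, a \in S -> b \in S ->
  exists p, [/\ path e a p, last a p = b & all (fun x => x \in S) p].

Lemma cross (S : {set 'I_n}) p x : x \in S -> path e x p -> last x p \notin S ->
  exists s v : 'I_n, [/\ s \in S, v \notin S & e s v].
Proof.
elim: p x => [|y p IH] x xS /=; first by rewrite xS.
case/andP=> exy py hl.
case: (boolP (y \in S)) => yS; first exact: (IH y yS py hl).
by exists x, y.
Qed.

Lemma uniq_nb (S : {set 'I_n}) s s' v : connin S -> s \in S -> s' \in S -> v \notin S ->
  e s v -> e s' v -> s' = s.
Proof.
move=> cS sS s'S vS esv es'v.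
apply/eqP; apply/negPn/negP => ne.
have [p [pp pl pa]] := cS s s' sS s'S.
move: pl; case: (shortenP pp) => p' pp' up' sub' hl'.
apply: nocyc; exists (v :: s :: p'); split.
- rewrite cons_uniq up' andbT in_cons negb_or.
  have -> : v != s by apply/eqP => h; move: vS; rewrite h sS.
  apply/negP => vp'; have := sub' _ vp' => vp.
  by move: (allP pa _ vp); rewrite (negbTE vS).
- case: p' pp' up' sub' hl' => [|z q] /= _ _ _; last by [].
  by move=> h; move: ne; rewrite h eqxx.
- rewrite /= esymm esv /= rcons_path pp' /= hl'; exact: es'v.
Qed.

Lemma grow : exists u, P [set: 'I_n] u.
Proof.
have key : forall k, (k < n)%N -> exists (S : {set 'I_n}) (u : 'I_n -> X), [/\ #|S| = k.+1, connin S & P S u].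
  elim=> [|k IH] hk.
    exists [set i0], u0; split => //; first by rewrite cards1.
    move=> a b; rewrite !in_set1 => /eqP -> /eqP ->; exists [::]; split => //.
  have [S [u [cS cnS PS]]] := IH (ltnW hk).
  have [y yS] : exists y, y \notin S.
    apply/existsP; rewrite -negb_forall; apply/negP => /forallP hall.
    have : #|S| = n.
      apply/eqP; rewrite eqn_leq; apply/andP; split.
        by rewrite -[X in (_ <= X)%N]card_ord max_card.
      rewrite -[X in (X <= _)%N]card_ord; apply: subset_leq_card.
      by apply/subsetP => z _; exact: hall.
    by rewrite cS => h; move: hk; rewrite -h ltnn.
  have [x xS] : exists x, x \in S.
    apply/set0Pn; by rewrite -card_gt0 cS.
  have /connectP [p pp pl] := conn x y.
  have [s [v [sS vS esv]]] : exists s v : 'I_n, [/\ s \in S, v \notin S & e s v].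
    apply: (@cross S p x xS pp); by rewrite -pl.
  have [u' Pu'] := Pstep S u s v PS sS vS esv (fun s' s'S es'v => @uniq_nb S s s' v cnS sS s'S vS esv es'v).
  exists (v |: S), u'; split => //.
    by rewrite cardsU1 vS cS.
  move=> a b; rewrite !in_setU1 => ha hb.
  have sub : forall q, all (fun x => x \in S) q -> all (fun x => x \in v |: S) q.
    move=> q /allP hq; apply/allP => z zq; rewrite in_setU1 hq // orbT //.
  case/orP: ha => [/eqP ->|aS]; case/orP: hb => [/eqP ->|bS].
  - by exists [::]; split.
  - have [q [pq lq aq]] := cnS s b sS bS.
    exists (s :: q); split => /=.
    + by rewrite esymm esv pq.
    + exact: lq.
    + by rewrite in_setU1 sS orbT sub.
  - have [q [pq lq aq]] := cnS a s aS sS.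
    exists (rcons q v); split.
    + by rewrite rcons_path pq lq esv.
    + by rewrite last_rcons.
    + by rewrite all_rcons in_setU1 eqxx sub.
  - have [q [pq lq aq]] := cnS a b aS bS.
    by exists q; split => //; rewrite sub.
have [S [u [cS _ PS]]] : exists (S : {set 'I_n}) (u : 'I_n -> X), [/\ #|S| = n, connin S & P S u].
  have n0 : (0 < n)%N by apply: (leq_ltn_trans _ (ltn_ord i0)).
  have [S [u [cS cn PS]]] := key n.-1 ltac:(by rewrite prednK).
  by exists S, u; split => //; rewrite cS prednK.
have -> : [set: 'I_n] = S.
  by apply/esym/eqP; rewrite eqEcard subsetT cardsT card_ord cS leqnn.
by exists u.
Qed.
End Grow.
End Tr.
Module Ph.
From Stdlib Require Import Lra Psatz.
Import Q.
Local Open Scope R_scope.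

Lemma id1 u a w : qmul (qmul (qconj u) a) (qmul (qmul (qconj a) u) w) = qscal (N a * N u) w.
Proof. qdes; unfold qmul, qconj, qscal, N; simpl; qext; ring. Qed.

Lemma id2 u a w : qmul (qmul (qconj (qmul (qmul a u) (qconj w))) a) u = qscal (N a * N u) w.
Proof. qdes; unfold qmul, qconj, qscal, N; simpl; qext; ring. Qed.

Lemma qnorm_one : qnorm qone = 1.
Proof. rewrite qnormE /N /=. have -> : 1 * 1 + 0 * 0 + 0 * 0 + 0 * 0 = 1 by ring. exact sqrt_1. Qed.

Lemma qnorm_pos a : a <> qzero -> 0 < qnorm a.
Proof.
move=> h; have := qnorm_ge0 a; case/Rle_lt_or_eq_dec => // h0.
by exfalso; apply: h; apply: qnorm_eq0.
Qed.

Lemma phases n (A : qmx n) (w : quat) (i0 : 'I_n) : qnorm w = 1 ->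
  qmx_upper_triangular A -> qmx_tree A ->
  exists u : 'I_n -> quat, (forall i, qnorm (u i) = 1) /\
    forall i j, A i j <> qzero ->
      qmul (qmul (qconj (u i)) (A i j)) (u j) = qscal (qnorm (A i j)) w.
Proof.
move=> hw hup [hconn hcyc].
have noloop : forall i, A i i = qzero.
  move=> i; apply: qnz_false; apply/negbTE/negP => h; apply: hcyc; left; exists i.
  by rewrite /qmx_adj h.
have adjE : forall i j, qmx_adj A i j = false -> A i j = qzero /\ A j i = qzero.
  move=> i j; rewrite /qmx_adj => /norP [h1 h2]; split; apply: qnz_false; exact: negbTE.
have nz_adj : forall i j, A i j <> qzero -> qmx_adj A i j /\ qmx_adj A j i.
  move=> i j h; have : qnz (A i j) = true.
    by case E: (qnz (A i j)) => //; exfalso; apply: h; exact: qnz_false.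
  by rewrite /qmx_adj => ->; rewrite orbT.
have trisym : forall i j, A i j <> qzero -> A j i <> qzero -> False.
  move=> i j h1 h2; case: (ltngtP i j) => hij.
  - by apply: h2; apply: hup.
  - by apply: h1; apply: hup.
  - have eij : i = j by apply: val_inj.
    by subst; apply: h1; apply: noloop.
pose P (S : {set 'I_n}) (u : 'I_n -> quat) :=
  (forall i, qnorm (u i) = 1) /\ forall i j, i \in S -> j \in S -> A i j <> qzero ->
      qmul (qmul (qconj (u i)) (A i j)) (u j) = qscal (qnorm (A i j)) w.
have [u [hu1 hu2]] : exists u, P [set: 'I_n] u.
  apply: (@Tr.grow n (qmx_adj A) _ _ hconn _ P i0 (fun _ => qone)).
  - by move=> x y; rewrite /qmx_adj orbC.
  - by move=> hc; apply: hcyc; right.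
  - split; first by move=> _; exact: qnorm_one.
    by move=> i j; rewrite !in_set1 => /eqP -> /eqP ->; rewrite noloop.
  - move=> S u s v [hu1 hu2] sS vS esv huniq.
    have vs : v != s by apply/eqP => h; move: vS; rewrite h sS.
    case: (qeq_dec (A s v) qzero) => hsv.
    +
      have hvs : A v s <> qzero.
        move=> h; move: esv; rewrite /qmx_adj hsv h qnz_zero //.
      pose a := A v s.
      pose uv := qscal (/ qnorm a) (qmul (qmul a (u s)) (qconj w)).
      exists (fun i => if i == v then uv else u i); split.
        move=> i; case: ifP => _ //.
        rewrite qnorm_scal; last by apply: Rlt_le; apply: Rinv_0_lt_compat; exact: qnorm_pos.
        rewrite !qnorm_mul qnorm_conj hu1 hw.
        have := qnorm_pos _ hvs; rewrite -/a => ha. field; lra.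
      move=> i j; rewrite !in_setU1 => hi hj hij.
      case: eqP => [iv|iv]; case: eqP => [jv|jv].
      * by exfalso; apply: hij; rewrite iv jv noloop.
      * subst i; have jS : j \in S by case/orP: hj => // /eqP.
        have ejv : qmx_adj A j v by case: (nz_adj _ _ hij).
        have js := huniq j jS ejv; subst j.
        rewrite /uv qconj_scal qmul_scal_l qmul_scal_l id2 (N_unit _ (hu1 s)).
        rewrite qscal_scal; f_equal.
        rewrite -/a -(qnorm_sq a). have := qnorm_pos _ hvs; rewrite -/a => ha. field; lra.
      * subst j; have iS : i \in S by case/orP: hi => // /eqP.
        have eiv : qmx_adj A i v by case: (nz_adj _ _ hij).
        have is' := huniq i iS eiv; subst i.
        by exfalso; exact: (hij hsv).
      * have iS : i \in S by case/orP: hi => // /eqP.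
        have jS : j \in S by case/orP: hj => // /eqP.
        exact: hu2.
    + pose a := A s v.
      pose uv := qscal (/ qnorm a) (qmul (qmul (qconj a) (u s)) w).
      exists (fun i => if i == v then uv else u i); split.
        move=> i; case: ifP => _ //.
        rewrite qnorm_scal; last by apply: Rlt_le; apply: Rinv_0_lt_compat; exact: qnorm_pos.
        rewrite !qnorm_mul qnorm_conj hu1 hw.
        have := qnorm_pos _ hsv; rewrite -/a => ha. field; lra.
      move=> i j; rewrite !in_setU1 => hi hj hij.
      case: eqP => [iv|iv]; case: eqP => [jv|jv].
      * by exfalso; apply: hij; rewrite iv jv noloop.
      * subst i; have jS : j \in S by case/orP: hj => // /eqP.
        have ejv : qmx_adj A j v by case: (nz_adj _ _ hij).
        have js := huniq j jS ejv; subst j.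
        by exfalso; apply: (trisym _ _ hsv hij).
      * subst j; have iS : i \in S by case/orP: hi => // /eqP.
        have eiv : qmx_adj A i v by case: (nz_adj _ _ hij).
        have is' := huniq i iS eiv; subst i.
        rewrite /uv qmul_scal_r id1 (N_unit _ (hu1 s)) qscal_scal; f_equal.
        rewrite -/a -(qnorm_sq a). have := qnorm_pos _ hsv; rewrite -/a => ha. field; lra.
      * have iS : i \in S by case/orP: hi => // /eqP.
        have jS : j \in S by case/orP: hj => // /eqP.
        exact: hu2.
exists u; split => // i j; apply: hu2; exact: in_setT.
Qed.
End Ph.
Module IV.
From Stdlib Require Import Lra Psatz FunctionalExtensionality.
From mathcomp Require Import Rstruct.
Local Open Scope R_scope.

Lemma big_scal (I : Type) (r : seq I) (f : I -> R) c :
  \big[Rplus/0]_(i <- r) (c * f i) = c * \big[Rplus/0]_(i <- r) f i.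
Proof. elim: r => [|a r IH]; rewrite ?big_nil ?big_cons; [ring| rewrite IH; ring]. Qed.

Lemma big_ge0 (I : Type) (r : seq I) (f : I -> R) :
  (forall i, 0 <= f i) -> 0 <= \big[Rplus/0]_(i <- r) f i.
Proof. move=> h; elim: r => [|a r IH]; rewrite ?big_nil ?big_cons; [lra| have := h a; lra]. Qed.

Lemma big_le (I : Type) (r : seq I) (f g : I -> R) :
  (forall i, f i <= g i) -> \big[Rplus/0]_(i <- r) f i <= \big[Rplus/0]_(i <- r) g i.
Proof. move=> h; elim: r => [|a r IH]; rewrite ?big_nil ?big_cons; [lra| have := h a; lra]. Qed.

Lemma big_cont (I : Type) (r : seq I) (f : I -> R -> R) :
  (forall i, continuity (f i)) -> continuity (fun s => \big[Rplus/0]_(i <- r) f i s).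
Proof.
move=> h; elim: r => [|a r IH].
  have -> : (fun s => \big[Rplus/0]_(i <- [::]) f i s) = fun _ => 0.
    by apply: functional_extensionality => x; rewrite big_nil.
  by apply: continuity_const => x y.
have -> : (fun s => \big[Rplus/0]_(i <- a :: r) f i s) =
   (fun s => f a s + \big[Rplus/0]_(i <- r) f i s).
  by apply: functional_extensionality => x; rewrite big_cons.
exact: continuity_plus.
Qed.

Lemma beta_form_scal n (A : qmx n) c b :
  beta_form A (fun i => c * b i) = c * c * beta_form A b.
Proof.
rewrite /beta_form -big_scal; apply: eq_bigr => i _.
rewrite -big_scal; apply: eq_bigr => j _; ring.
Qed.

Lemma beta_form_ge0 n (A : qmx n) b : (forall i, 0 <= b i) -> 0 <= beta_form A b.
Proof.
move=> h; apply: big_ge0 => i; apply: big_ge0 => j.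
have := h i; have := h j; have := Q.qnorm_ge0 (A i j).
move=> h1 h2 h3; apply: Rmult_le_pos; [apply: Rmult_le_pos|]; auto.
Qed.

Lemma sq_scal n c (b : 'I_n -> R) :
  \big[Rplus/0]_(i < n) ((c * b i) * (c * b i)) = c * c * \big[Rplus/0]_(i < n) (b i * b i).
Proof. rewrite -big_scal; apply: eq_bigr => i _; ring. Qed.

Lemma ivt n (A : qmx n) (i0 : 'I_n) (bs : 'I_n -> R) t :
  (forall i, A i i = qzero) -> in_pos_sphere bs ->
  0 <= t <= beta_form A bs ->
  exists b, in_pos_sphere b /\ beta_form A b = t.
Proof.
move=> hdiag [hs hp] [t0 tr].
pose e := fun i : 'I_n => if i == i0 then 1 else 0.
have he : in_pos_sphere e.
  split; last by move=> i; rewrite /e; case: ifP => _; lra.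
  rewrite (bigD1 i0) //= /e eqxx big1; first ring.
  by move=> i /negbTE ->; ring.
have Fe : beta_form A e = 0.
  rewrite /beta_form big1 // => i _; rewrite big1 // => j _.
  rewrite /e; case: eqP => [->|_]; last ring.
  case: eqP => [->|_]; last ring.
  rewrite hdiag Q.qnorm_zero; ring.
case: (Req_dec t 0) => [->|tn0]; first by exists e.
case: (Req_dec t (beta_form A bs)) => [->|trn]; first by exists bs.
pose g := fun s (i : 'I_n) => (1 - s) * e i + s * bs i.
pose G := fun s => beta_form A (g s) - t * \big[Rplus/0]_(i < n) (g s i * g s i).
have cG : continuity G.
  apply: continuity_minus.
    apply: big_cont => i; apply: big_cont => j.
    apply: continuity_mult; [apply: continuity_mult|exact: continuity_const];
      rewrite /g; reg.
  apply: continuity_mult; first exact: continuity_const.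
  apply: big_cont => i; rewrite /g; reg.
have g0 : g 0 = e by apply: functional_extensionality => i; rewrite /g; ring.
have g1 : g 1 = bs by apply: functional_extensionality => i; rewrite /g; ring.
have [s [[s0 s1] Gs]] : {s | 0 <= s <= 1 /\ G s = 0}.
  apply: IVT_cor => //; first lra.
  rewrite /G g0 g1 Fe hs; case: he => -> _; nra.
have gpos : forall i, 0 <= g s i.
  move=> i; rewrite /g /e; have := hp i; case: ifP => _; nra.
pose N2 := \big[Rplus/0]_(i < n) (g s i * g s i).
have N2pos : 0 < N2.
  have hle : g s i0 * g s i0 <= N2.
    rewrite /N2 (bigD1 i0) //=.
    have : 0 <= \big[Rplus/0]_(i < n | i != i0) (g s i * g s i).
      elim/big_rec: _ => [|i x _ hx]; first lra.
      have := gpos i; nra.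
    move=> h; have := Rplus_le_compat_l (g s i0 * g s i0) 0 _ h; rewrite Rplus_0_r; exact.
  case: (Rlt_le_dec s 1) => hs1.
    have : g s i0 >= 1 - s.
      rewrite /g /e eqxx; have := hp i0; nra.
    nra.
  have es : s = 1 by lra.
  rewrite /N2 es g1 hs; lra.
pose c := / sqrt N2.
have hc : c * c * N2 = 1.
  rewrite /c -Rinv_mult sqrt_sqrt; [field|]; lra.
exists (fun i => c * g s i); split; first split.
- by rewrite sq_scal.
- move=> i; apply: Rmult_le_pos; last exact: gpos.
  apply: Rlt_le; apply: Rinv_0_lt_compat; exact: sqrt_lt_R0.
- rewrite beta_form_scal.
  have : beta_form A (g s) = t * N2 by rewrite /N2; move: Gs; rewrite /G; lra.
  move=> ->; transitivity (t * (c * c * N2)); [ring | rewrite hc; ring].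
Qed.
End IV.

Module Main.
From Stdlib Require Import Lra Psatz FunctionalExtensionality.
Import Q.
Local Open Scope R_scope.

Lemma big_norm (I : Type) (r : seq I) (F : I -> quat) :
  qnorm (\big[qadd/qzero]_(i <- r) F i) <= \big[Rplus/0]_(i <- r) qnorm (F i).
Proof.
elim/big_rec2: _ => [|i y1 y2 _ h]; first by rewrite qnorm_zero; lra.
have := qnorm_add (F i) y2; lra.
Qed.

Lemma big_qscal (I : Type) (r : seq I) (f : I -> R) p :
  \big[qadd/qzero]_(i <- r) qscal (f i) p = qscal (\big[Rplus/0]_(i <- r) f i) p.
Proof.
elim/big_rec2: _ => [|i y1 y2 _ ->]; first by rewrite qscal0.
by rewrite qadd_scal.
Qed.

Lemma qre_big (I : Type) (r : seq I) (F : I -> quat) :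
  qre (\big[qadd/qzero]_(i <- r) F i) = \big[Rplus/0]_(i <- r) qre (F i).
Proof. elim/big_rec2: _ => [|i y1 y2 _ <-] //. Qed.

Lemma qre_conj_mul p : qre (qmul (qconj p) p) = N p.
Proof. destruct p; rewrite /N /=; ring. Qed.

Lemma main n (A : qmx n) (bs : 'I_n -> R) (i0 : 'I_n) :
  qmx_upper_triangular A -> qmx_tree A ->
  in_pos_sphere bs -> (forall b, in_pos_sphere b -> beta_form A b <= beta_form A bs) ->
  forall q : quat, numrange A q <-> qdisk qzero (beta_form A bs) q.
Proof.
move=> hup htree hbs hmax q.
have noloop : forall i, A i i = qzero.
  case: htree => _ hcyc.
  move=> i; apply: qnz_false; apply/negbTE/negP => h; apply: hcyc; left; exists i.
  by rewrite /qmx_adj h.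
rewrite /qdisk qnorm_sub0; split.
- case=> x [hx ->].
  pose b := fun i => qnorm (x i).
  have hb : in_pos_sphere b.
    split; last by move=> i; exact: qnorm_ge0.
    have := f_equal qre hx; rewrite /qdot qre_big /= => <-.
    by apply: eq_bigr => i _; rewrite /b qnorm_sq /N; ring.
  apply: (Rle_trans _ _ _ _ (hmax b hb)).
  rewrite /qquad /beta_form.
  apply: (Rle_trans _ _ _ (big_norm _ _ _)).
  apply: IV.big_le => i; apply: (Rle_trans _ _ _ (big_norm _ _ _)).
  apply: IV.big_le => j; rewrite !qnorm_mul qnorm_conj /b; lra.
- move=> hq.
  pose t := qnorm q.
  have [w [hw hqw]] : exists w, qnorm w = 1 /\ q = qscal t w.
    case: (Req_dec t 0) => ht.
      exists qone; split; first exact: Ph.qnorm_one.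
      by rewrite ht qscal0; apply: qnorm_eq0.
    have tpos : 0 < t by have := qnorm_ge0 q; rewrite -/t; lra.
    exists (qscal (/ t) q); split.
      rewrite qnorm_scal; last by apply: Rlt_le; apply: Rinv_0_lt_compat.
      by rewrite -/t; field.
    rewrite qscal_scal Rinv_r // qscal1 //.
  have [b [hb hbt]] : exists b, in_pos_sphere b /\ beta_form A b = t.
    apply: (@IV.ivt n A i0 bs t noloop hbs); split; first exact: qnorm_ge0.
    exact: hq.
  have [u [hu1 hu2]] := @Ph.phases n A w i0 hw hup htree.
  exists (fun i => qscal (b i) (u i)); split.
  + rewrite /in_qsphere /qdot.
    have -> : qone = qscal (\big[Rplus/0]_(i < n) (b i * b i)) qone.
      by case: hb => -> _; rewrite qscal1.
    rewrite -big_qscal; apply: eq_bigr => i _.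
    rewrite qconj_scal qmul_scal_l qmul_scal_r qmul_conj_l N_unit // !qscal_scal.
    f_equal; ring.
  + rewrite hqw -hbt /qquad /beta_form -big_qscal; apply: eq_bigr => i _.
    rewrite -big_qscal; apply: eq_bigr => j _.
    rewrite qconj_scal qmul_scal_l qmul_scal_l qmul_scal_r.
    case: (qeq_dec (A i j) qzero) => hij.
      rewrite hij qmul_zero_r qmul_zero_l qnorm_zero Rmult_0_r qscal0 !qscal_zero //.
    by rewrite hu2 // !qscal_scal; f_equal; ring.
Qed.
End Main.
Module EVT.
From HB Require Import structures.
From mathcomp Require Import all_order all_algebra.
From mathcomp Require Import all_classical all_reals all_analysis.
From mathcomp Require Import Rstruct Rstruct_topology.
Import Order.TTheory GRing.Theory Num.Theory.
Local Open Scope classical_set_scope.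
Local Open Scope ring_scope.

Section S.
Variable n : nat.
Import ArrowAsProduct.
Let T := ('I_n -> R).

Lemma cont_sum (I : Type) (r : seq I) (F : I -> T -> R) :
  (forall i, continuous (F i)) ->
  continuous (fun f : T => \big[Rplus/0%R]_(i <- r) F i f).
Proof.
move=> hF; elim: r => [|a r IH].
  have -> : (fun f : T => \big[Rplus/0%R]_(i <- [::]) F i f) = fun _ => 0%R.
    by apply: (@boolp.funext T R) => g; rewrite big_nil.
  move=> f; exact: cvg_cst.
have -> : (fun f : T => \big[Rplus/0%R]_(i <- a :: r) F i f) =
   (fun f => F a f + \big[Rplus/0%R]_(i <- r) F i f).
  by apply: (@boolp.funext T R) => g; rewrite big_cons.
move=> f; rewrite /continuous_at; apply: (@cvgD _ R^o _ (nbhs f)); [exact: hF|exact: IH].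
Qed.

Lemma cont_proj (i : 'I_n) : continuous (fun f : T => f i).
Proof. exact: proj_continuous. Qed.

Lemma cont_mul (F G : T -> R) : continuous F -> continuous G ->
  continuous (fun f => Rmult (F f) (G f)).
Proof. move=> hF hG f; apply: cvgM; [exact: hF | exact: hG]. Qed.

Lemma cont_cst (c : R) : continuous (fun f : T => c).
Proof. move=> f; exact: cvg_cst. Qed.

Lemma evt_pos_sphere (F : ('I_n -> R) -> R) :
  'I_n -> continuous (F : T -> R) ->
  exists b, in_pos_sphere b /\ forall b', in_pos_sphere b' -> Rle (F b') (F b).
Proof.
move=> n0 cF.
pose A : set T := [set b | in_pos_sphere b].
have A0 : A !=set0.
  exists (fun i : 'I_n => if i == n0 then 1%R else 0%R); split.
    rewrite (bigD1 n0) //= eqxx big1; last by move=> i /negbTE ->; exact: Rmult_0_l.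
    by rewrite Rmult_1_l Rplus_0_r.
  by move=> i; case: ifP => _; [exact: Rle_0_1| exact: Rle_refl].
have cA : compact A.
  pose B : set T := [set f : T | forall i, `[0%R, 1%R]%classic (f i)].
  have cB : compact B.
    exact: (@tychonoff _ (fun _ : 'I_n => R) (fun _ => `[0%R,1%R]%classic) (fun _ => @segment_compact _ 0%R 1%R)).
  apply: (@subclosed_compact _ A B) => //.
    have -> : A = (fun f : T => \big[Rplus/0%R]_(i < n) (f i * f i)%R) @^-1` [set 1%R]
       `&` \bigcap_(i in [set: 'I_n]) ((fun f : T => f i) @^-1` [set x | (0 <= x)%R]).
      apply/seteqP; split.
        move=> f [hs hp]; split; first exact: hs.
        by move=> i _; apply/RleP; exact: hp.
      move=> f [hs hp]; split; first exact: hs.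
      by move=> i; apply/RleP; exact: hp.
    apply: closedI.
      apply: preimage_closed; last exact: closed_eq.
      move=> f _; apply: cont_sum => i; apply: cont_mul; exact: cont_proj.
    apply: closed_bigI => i _; apply: preimage_closed.
      move=> f _; exact: cont_proj.
    exact: closed_ge.
  move=> f [hs hp] i; rewrite /= in_itv /=; apply/andP; split.
    by apply/RleP; exact: hp.
  have hle : f i * f i <= 1.
    apply: (@le_trans _ _ (\big[Rplus/0%R]_(j < n) (f j * f j)%R)); last by rewrite hs.
    rewrite (bigD1 i) //= RplusE lerDl.
    by apply: sumr_ge0 => j _; apply: mulr_ge0; apply/RleP; exact: hp.
  have h0 : 0 <= f i by apply/RleP; exact: hp.
  rewrite leNgt; apply/negP => hlt.
  have : 1 < f i * f i by rewrite -(mulr1 1) ltr_pM.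
  by rewrite ltNge hle.
have [c Ac Hc] := compact_EVT_max A0 cA (continuous_subspaceT cF).
exists c; split; first by move: Ac; rewrite inE.
move=> b' hb'; apply/RleP; apply: (Hc b'); rewrite inE; exact: hb'.
Qed.

Lemma cont_beta (A : qmx n) : continuous (beta_form A : T -> R).
Proof.
rewrite /beta_form; apply: cont_sum => i; apply: cont_sum => j.
apply: (@cont_mul (fun f => f i * f j)%coqR (fun _ => qnorm (A i j))); last exact: cont_cst.
apply: (@cont_mul (fun f => f i) (fun f => f j)); exact: cont_proj.
Qed.
End S.
End EVT.


Theorem theorem3p5 (n : nat) (A : qmx n) :
  (0 < n)%N ->
  qmx_upper_triangular A ->
  qmx_nilpotent A ->
  qmx_tree A ->
  exists r : R,
    ((exists b, in_pos_sphere b /\ beta_form A b = r) /\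
     (forall b, in_pos_sphere b -> (beta_form A b <= r)%R)) /\
    (forall q : quat, numrange A q <-> qdisk qzero r q).
Proof.
move=> n0 hup _ htree.
pose i0 : 'I_n := Ordinal n0.
have [bs [hbs hmax]] := @EVT.evt_pos_sphere n (beta_form A) i0 (@EVT.cont_beta n A).
exists (beta_form A bs); split; first by split; [exists bs | ].
exact: (@Main.main n A bs i0 hup htree hbs hmax).
Qed.
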